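(* Let $G$ be the 3-dimensional Gauss map on the tetrahedron $S$. For every point $(x,y,z)\in S$ with $x,y,z\in\mathbb{Q}$ there exists $k\ge0$ with $G^k(x,y,z)=(0,0,0)$.
   Context: Let $S = \{(x,y,z)\in\mathbb{R}^3 : 0\le z\le y\le x\le 1\}$. For integers $n\ge1$ define the pieces $\mathbb{A}_n = \{\frac1{n+1} < x \le \frac1n,\ 0\le z\le y\le 1-nx\}$, $\mathbb{B}_n = \{0\le z\le 1-nx < y \le x\}$, $\mathbb{C}_n = \{1-nx < z \le y \le x \le \frac1n\}$ (all subsets of $S$); together with $\{(0,0,0)\}$ they partition $S$. The 3-dimensional Gauss map $G:S\to S$ is $G(0,0,0)=(0,0,0)$, $G(x,y,z)=\left(\frac1x-n,\frac yx,\frac zx\right)$ on $\mathbb{A}_n$, $G(x,y,z)=\left(\frac{1-y}{x}-n+1,\frac{x-y+z}{x},\frac{x-y}{x}\right)$ on $\mathbb{B}_n$, $G(x,y,z)=\left(\frac{1-z}{x}-n+1,\frac{x-z}{x},\frac{y-z}{x}\right)$ on $\mathbb{C}_n$. *)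

(* Defs.v *)
From HB Require Import structures.
From mathcomp Require Import all_boot all_order all_algebra.
Set Implicit Arguments. Unset Strict Implicit. Unset Printing Implicit Defensive.
Import Order.TTheory GRing.Theory Num.Theory.
Local Open Scope ring_scope.

Section Gauss.
Variable R : archiRealFieldType.

Definition pt := (R * R * R)%type.

Definition inS (p : pt) : bool :=
  let: (x, y, z) := p in [&& 0 <= z, z <= y, y <= x & x <= 1].

Definition inA (n : nat) (p : pt) : bool :=
  let: (x, y, z) := p in
  [&& inS p, (n.+1%:R)^-1 < x, x <= (n%:R)^-1, 0 <= z, z <= y & y <= 1 - n%:R * x].
Definition inB (n : nat) (p : pt) : bool :=
  let: (x, y, z) := p in
  [&& inS p, 0 <= z, z <= 1 - n%:R * x, 1 - n%:R * x < y & y <= x].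
Definition inC (n : nat) (p : pt) : bool :=
  let: (x, y, z) := p in
  [&& inS p, 1 - n%:R * x < z, z <= y, y <= x & x <= (n%:R)^-1].

(* For (x,y,z) in S \ {0}, all three pieces containing the point have index
   n = floor(1/x) (since each forces 1/(n+1) < x <= 1/n); we compute n this
   way and then test the pieces. Values outside S are irrelevant junk. *)
Definition gidx (p : pt) : nat := let: (x, _, _) := p in Num.truncn (x^-1).

Definition G (p : pt) : pt :=
  let: (x, y, z) := p in
  let n := gidx p in
  if p == (0, 0, 0) then (0, 0, 0)
  else if inA n p then (x^-1 - n%:R, y / x, z / x)
  else if inB n p then ((1 - y) / x - n%:R + 1, (x - y + z) / x, (x - y) / x)
  else ((1 - z) / x - n%:R + 1, (x - z) / x, (y - z) / x).

End Gauss.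

(* Main.v *)
Require Import Defs.
From HB Require Import structures.
From mathcomp Require Import all_boot all_order all_algebra.
From mathcomp Require Import lra ring.
Import Order.TTheory GRing.Theory Num.Theory.
Local Open Scope ring_scope.

Definition integ (c : rat) (p : pt rat) : bool :=
  let: (x, y, z) := p in
  [&& c * x \is a Num.int, c * y \is a Num.int & c * z \is a Num.int].

Lemma idx_bounds (x : rat) : 0 < x -> x <= 1 ->
  let n := Num.truncn (x^-1) in [/\ (1 <= n)%N, n%:R * x <= 1 & 1 < n.+1%:R * x].
Proof.
move=> x0 x1 /=.
have w1 : 1 <= x^-1 by rewrite invr_ge1 // unitfE gt_eqF.
have := truncn_itv (ltW (lt_le_trans ltr01 w1)) => /andP[h1 h2].
split.
- by rewrite truncn_gt0.
- by rewrite -ler_pdivlMr // div1r.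
- by rewrite -ltr_pdivrMr // div1r.
Qed.

Lemma divpt (x N1 N2 N3 c : rat) : 0 < x -> 0 <= N3 -> N3 <= N2 -> N2 <= N1 -> N1 < x ->
  c * N1 \is a Num.int -> c * N2 \is a Num.int -> c * N3 \is a Num.int ->
  [/\ inS (N1/x, N2/x, N3/x), N1/x < 1 & integ (c * x) (N1/x, N2/x, N3/x)].
Proof.
move=> x0 h3 h32 h21 h1 i1 i2 i3.
have xi : 0 < x^-1 by rewrite invr_gt0.
have e : forall N, c * x * (N / x) = c * N.
  by move=> N; field; rewrite gt_eqF.
split.
- rewrite /inS; apply/and4P; split.
  + by rewrite divr_ge0 // ltW.
  + by rewrite ler_pM2r.
  + by rewrite ler_pM2r.
  + by rewrite ler_pdivrMr // mul1r ltW.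
- by rewrite ltr_pdivrMr // mul1r.
- by rewrite /integ !e i1 i2 i3.
Qed.

Lemma step (x y z c : rat) : inS (x, y, z) -> (x, y, z) != (0, 0, 0) ->
  c \is a Num.int -> integ c (x, y, z) ->
  exists x' y' z', [/\ G (x, y, z) = (x', y', z'), inS (x', y', z'), x' < 1,
     0 < x & integ (c * x) (x', y', z')].
Proof.
move=> hS hne ci /and3P[ix iy iz].
have hS' := hS; move: hS' => /and4P[z0 zy yx x1].
have x0 : 0 < x.
  rewrite lt_neqAle (le_trans z0 (le_trans zy yx)) andbT.
  apply/negP => /eqP ex; move: hne; rewrite -ex.
  have ey : y = 0 by apply/le_anti; rewrite {1}ex yx (le_trans z0 zy).
  have ez : z = 0 by apply/le_anti; rewrite -{1}ey zy z0.
  by rewrite ey ez eqxx.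
have [n1 nx1 nx2] := idx_bounds x x0 x1.
set n := Num.truncn x^-1 in n1 nx1 nx2.
have n0 : 0 < n%:R :> rat by rewrite ltr0n.
have ni : n%:R \is a Num.int := natr_int rat n.
have cni : c * n%:R \is a Num.int by rewrite rpredM.
have lo : (n.+1%:R)^-1 < x by rewrite -div1r ltr_pdivrMr ?ltr0n // mulrC.
have hi : x <= (n%:R)^-1 by rewrite -div1r ler_pdivlMr // mulrC.
have ci1 : c * 1 \is a Num.int by rewrite mulr1.
rewrite /G /gidx -/n (negbTE hne).
case: ifP => hA.
  move: hA; rewrite /inA => /and5P[_ _ _ _ /andP[_ hy]].
  have -> : x^-1 - n%:R = (1 - n%:R * x) / x by field; rewrite gt_eqF.
  have [] := divpt x (1 - n%:R * x) y z c x0 z0 zy hy _ _ iy iz.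
  - by move: nx2; rewrite -addn1 natrD mulrDl mul1r; lra.
  - by rewrite mulrBr rpredB // mulrA (mulrC c) -mulrA rpredM.
  by move=> h1 h2 h3; do 3 eexists; split; eauto.
have hy : 1 - n%:R * x < y.
  rewrite ltNge; apply/negP => hy; move/negP: hA; apply.
  by rewrite /inA hS lo hi z0 zy hy.
case: ifP => hB.
  move: hB; rewrite /inB => /and5P[_ _ hz _ _].
  have -> : (1 - y) / x - n%:R + 1 = (1 - y - n%:R * x + x) / x by field; rewrite gt_eqF.
  have -> : (x - y + z) / x = (x - y + z) / x by [].
  have [] := divpt x (1 - y - n%:R * x + x) (x - y + z) (x - y) c x0.
  - by rewrite subr_ge0.
  - by rewrite lerDl.
  - by lra.
  - by lra.
  - have -> : c * (1 - y - n%:R * x + x) = c * 1 - c * y - n%:R * (c * x) + c * x by ring.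
    exact: (rpredD (rpredB (rpredB ci1 iy) (rpredM ni ix)) ix).
  - have -> : c * (x - y + z) = c * x - c * y + c * z by ring.
    exact: (rpredD (rpredB ix iy) iz).
  - have -> : c * (x - y) = c * x - c * y by ring.
    by rewrite rpredB.
  by move=> h1 h2 h3; do 3 eexists; split; eauto.
have hz : 1 - n%:R * x < z.
  rewrite ltNge; apply/negP => hz; move/negP: hB; apply.
  by rewrite /inB hS z0 hz hy yx.
have -> : (1 - z) / x - n%:R + 1 = (1 - z - n%:R * x + x) / x by field; rewrite gt_eqF.
have [] := divpt x (1 - z - n%:R * x + x) (x - z) (y - z) c x0.
- by rewrite subr_ge0.
- by lra.
- by lra.
- by lra.
- have -> : c * (1 - z - n%:R * x + x) = c * 1 - c * z - n%:R * (c * x) + c * x by ring.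
  exact: (rpredD (rpredB (rpredB ci1 iz) (rpredM ni ix)) ix).
- have -> : c * (x - z) = c * x - c * z by ring.
  by rewrite rpredB.
- have -> : c * (y - z) = c * y - c * z by ring.
  by rewrite rpredB.
by move=> h1 h2 h3; do 3 eexists; split; eauto.
Qed.

Lemma term (m : nat) : forall x y z : rat, (0 < m)%N -> inS (x, y, z) -> x < 1 ->
  integ m%:R (x, y, z) -> exists k : nat, iter k (@G rat) (x, y, z) = (0, 0, 0).
Proof.
elim/ltn_ind: m => m IH x y z m0 hS hx hI.
have [e0|ne] := eqVneq (x, y, z) (0, 0, 0); first by exists 0%N.
have [x' [y' [z' [hG hS' hx' x0 hI']]]] := step x y z m%:R hS ne (natr_int rat m) hI.
have hn : m%:R * x \is a Num.nat.
  rewrite natrEint; move: hI => /and3P[-> _ _] /=.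
  by rewrite mulr_ge0 // ltW.
set m' := Num.truncn (m%:R * x).
have em : m'%:R = m%:R * x by rewrite truncnK.
have lt : (m' < m)%N.
  rewrite -(ltr_nat rat) em -{2}(mulr1 m%:R) ltr_pM2l //.
  by rewrite ltr0n.
have m'0 : (0 < m')%N.
  by rewrite -(ltr_nat rat) em mulr_gt0 // ltr0n.
have [k hk] := IH m' lt x' y' z' m'0 hS' hx' ltac:(by rewrite em).
by exists k.+1; rewrite iterSr hG.
Qed.

Theorem mainTheorem13 (x y z : rat) :
  inS (x, y, z) -> exists k : nat, iter k (@G rat) (x, y, z) = (0, 0, 0).
Proof.
move=> hS.
have intq : forall q : rat, exists d, ((d.+1)%:R * q \is a Num.int).
  move=> q; have [d ed] := denqP q; exists d.
  have -> : d.+1%:R * q = (numq q)%:~R by rewrite numqE ed mulrC.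
  exact: intr_int.
have [d1 h1] := intq x; have [d2 h2] := intq y; have [d3 h3] := intq z.
set m := (d1.+1 * d2.+1 * d3.+1)%N.
have hI : integ m%:R (x, y, z).
  rewrite /integ /m !natrM; apply/and3P; split.
  - have -> : d1.+1%:R * d2.+1%:R * d3.+1%:R * x = (d1.+1%:R * x) * (d2.+1%:R * d3.+1%:R) by ring.
    by rewrite rpredM // -natrM natr_int.
  - have -> : d1.+1%:R * d2.+1%:R * d3.+1%:R * y = (d2.+1%:R * y) * (d1.+1%:R * d3.+1%:R) by ring.
    by rewrite rpredM // -natrM natr_int.
  - have -> : d1.+1%:R * d2.+1%:R * d3.+1%:R * z = (d3.+1%:R * z) * (d1.+1%:R * d2.+1%:R) by ring.
    by rewrite rpredM // -natrM natr_int.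
have m0 : (0 < m)%N by rewrite /m !muln_gt0.
have hS' := hS; move: hS' => /and4P[_ _ _ x1].
have [xl|xe] := ltP x 1; first exact: (term m x y z m0 hS xl hI).
have [e0|ne] := eqVneq (x, y, z) (0, 0, 0); first by exists 0%N.
have [x' [y' [z' [hG hS2 hx' x0 hI']]]] := step x y z m%:R hS ne (natr_int rat m) hI.
have ex : x = 1 by apply/le_anti; rewrite x1 xe.
rewrite ex mulr1 in hI'.
have [k hk] := term m x' y' z' m0 hS2 hx' hI'.
by exists k.+1; rewrite iterSr hG.
Qed.
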